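(* The ai-semiring $S_{(4,435)}$ is nonfinitely based.
   Context: An ai-semiring is an algebra $(S,+,\cdot)$ with $(S,+)$ a semilattice, $(S,\cdot)$ a semigroup, and both distributive laws. An algebra is finitely based if some finite set of identities derives all its identities. $S_{(4,435)}$ has carrier $\{1,2,3,4\}$; addition: $x+x=x$, $2+x=x$, $1+x=1$ for all $x$, $3+4=1$; multiplication (row $a$, column $b$ gives $a\cdot b$): row $1$: $1,2,1,1$; row $2$: $2,2,2,2$; row $3$: $1,2,1,3$; row $4$: $1,2,3,4$. *)

(* Defs.v *)
From Stdlib Require Import List.

Inductive term : Type :=
| Var : nat -> term
| Add : term -> term -> term
| Mul : term -> term -> term.

Definition identity := (term * term)%type.

Fixpoint subst (s : nat -> term) (t : term) : term :=
  match t with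
  | Var n => s n
  | Add a b => Add (subst s a) (subst s b)
  | Mul a b => Mul (subst s a) (subst s b)
  end.

Inductive derives (Sigma : list identity) : term -> term -> Prop :=
| der_ax : forall u v, In (u, v) Sigma -> derives Sigma u v
| der_refl : forall u, derives Sigma u u
| der_sym : forall u v, derives Sigma u v -> derives Sigma v u
| der_trans : forall u v w,
    derives Sigma u v -> derives Sigma v w -> derives Sigma u w
| der_subst : forall (s : nat -> term) u v,
    derives Sigma u v -> derives Sigma (subst s u) (subst s v)
| der_add : forall u u' v v',
    derives Sigma u u' -> derives Sigma v v' ->
    derives Sigma (Add u v) (Add u' v')
| der_mul : forall u u' v v',
    derives Sigma u u' -> derives Sigma v v' ->
    derives Sigma (Mul u v) (Mul u' v').

Fixpoint eval {A : Type} (add mul : A -> A -> A) (e : nat -> A) (t : term) : A :=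
  match t with
  | Var n => e n
  | Add a b => add (eval add mul e a) (eval add mul e b)
  | Mul a b => mul (eval add mul e a) (eval add mul e b)
  end.

Definition satisfies {A : Type} (add mul : A -> A -> A) (p : identity) : Prop :=
  forall e : nat -> A, eval add mul e (fst p) = eval add mul e (snd p).

Definition finitely_based {A : Type} (add mul : A -> A -> A) : Prop :=
  exists Sigma : list identity,
    (forall p, In p Sigma -> satisfies add mul p) /\
    (forall u v, satisfies add mul (u, v) -> derives Sigma u v).

Inductive S4 : Type := e1 | e2 | e3 | e4.

Definition S4add (x y : S4) : S4 :=
  match x, y with
  | e1, _ => e1
  | _, e1 => e1
  | e2, z => z
  | z, e2 => z
  | e3, e3 => e3
  | e4, e4 => e4
  | e3, e4 => e1
  | e4, e3 => e1
  end.

Definition S4mul (x y : S4) : S4 :=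
  match x, y with
  | e1, e1 => e1 | e1, e2 => e2 | e1, e3 => e1 | e1, e4 => e1
  | e2, _ => e2
  | e3, e1 => e1 | e3, e2 => e2 | e3, e3 => e1 | e3, e4 => e3
  | e4, e1 => e1 | e4, e2 => e2 | e4, e3 => e3 | e4, e4 => e4
  end.

(* Main.v *)
From Stdlib Require Import List Arith Lia Bool Classical.
Import ListNotations.
Require Import Defs.

Lemma addA x y z : S4add x (S4add y z) = S4add (S4add x y) z. Proof. destruct x,y,z; reflexivity. Qed.
Lemma mulA x y z : S4mul x (S4mul y z) = S4mul (S4mul x y) z. Proof. destruct x,y,z; reflexivity. Qed.
Lemma dl x y z : S4mul x (S4add y z) = S4add (S4mul x y) (S4mul x z). Proof. destruct x,y,z; reflexivity. Qed.
Lemma dr x y z : S4mul (S4add y z) x = S4add (S4mul y x) (S4mul z x). Proof. destruct x,y,z; reflexivity. Qed.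

Fixpoint words (t : term) : list (list nat) :=
  match t with
  | Var n => [[n]]
  | Add a b => words a ++ words b
  | Mul a b => flat_map (fun w1 => map (fun w2 => w1 ++ w2) (words b)) (words a)
  end.

Definition sumL (l : list S4) := fold_right S4add e2 l.
Definition prodL (l : list S4) := fold_right S4mul e4 l.
Definition wv (e : nat -> S4) (w : list nat) := prodL (map e w).

Lemma sumL_app l1 l2 : sumL (l1 ++ l2) = S4add (sumL l1) (sumL l2).
Proof. induction l1; simpl. destruct (sumL l2); reflexivity. rewrite IHl1, addA; reflexivity. Qed.
Lemma prodL_app l1 l2 : prodL (l1 ++ l2) = S4mul (prodL l1) (prodL l2).
Proof. induction l1; simpl. destruct (prodL l2); reflexivity. rewrite IHl1, mulA; reflexivity. Qed.

Lemma eval_words e t : eval S4add S4mul e t = sumL (map (wv e) (words t)).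
Proof.
  induction t; simpl.
  - unfold wv; simpl. destruct (e n); reflexivity.
  - rewrite map_app, sumL_app, IHt1, IHt2; reflexivity.
  - rewrite IHt1, IHt2. clear IHt1 IHt2. induction (words t1) as [|w1 A IH]; simpl. reflexivity.
    rewrite map_app, sumL_app, <- IH, dr. f_equal.
    clear IH. induction (words t2) as [|w2 B IHB]; simpl. destruct (wv e w1); reflexivity.
    rewrite dl, <- IHB. unfold wv. rewrite map_app, prodL_app. reflexivity.
Qed.

Lemma in_words_mul a b m : In m (words (Mul a b)) <->
  exists m1 m2, In m1 (words a) /\ In m2 (words b) /\ m = m1 ++ m2.
Proof.
  simpl. rewrite in_flat_map. split.
  - intros [m1 [H1 H2]]. apply in_map_iff in H2. destruct H2 as [m2 [<- H2]]. eauto.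
  - intros [m1 [m2 [H1 [H2 ->]]]]. exists m1; split; auto. apply in_map; auto.
Qed.

Lemma words_ex t : exists w, In w (words t).
Proof.
  induction t; simpl. eauto.
  destruct IHt1 as [w H]; exists w; apply in_or_app; auto.
  destruct IHt1 as [w1 H1], IHt2 as [w2 H2]. exists (w1 ++ w2). apply in_words_mul; eauto.
Qed.

Lemma words_ne t w : In w (words t) -> 1 <= length w.
Proof.
  revert w; induction t; intros w H.
  - simpl in H. destruct H as [<-|[]]; simpl; lia.
  - simpl in H. apply in_app_or in H. destruct H; auto.
  - apply in_words_mul in H. destruct H as [m1 [m2 [H1 [H2 ->]]]].
    rewrite length_app. specialize (IHt1 _ H1). lia.
Qed.

Fixpoint IP (s : nat -> term) (w : list nat) (m : list nat) : Prop :=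
  match w with
  | [] => m = []
  | y :: w' => exists m1 m2, m = m1 ++ m2 /\ In m1 (words (s y)) /\ IP s w' m2
  end.

Lemma IP_app s w1 w2 m : IP s (w1 ++ w2) m <->
  exists m1 m2, m = m1 ++ m2 /\ IP s w1 m1 /\ IP s w2 m2.
Proof.
  revert m; induction w1 as [|y w1 IH]; intros m; simpl.
  - split. intros H. exists [], m; auto. intros [m1 [m2 [-> [-> H]]]]; auto.
  - split.
    + intros [a [b [-> [Ha Hb]]]]. apply IH in Hb. destruct Hb as [c [d [-> [Hc Hd]]]].
      exists (a ++ c), d. split. rewrite app_assoc; auto. split; eauto.
    + intros [c [d [-> [[a [b [-> [Ha Hb]]]] Hd]]]].
      exists a, (b ++ d). split. rewrite app_assoc; auto. split; auto. apply IH; eauto.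
Qed.

Lemma IP_ex s w : exists m, IP s w m.
Proof.
  induction w as [|y w IH]; simpl. eauto.
  destruct IH as [m2 H2]. destruct (words_ex (s y)) as [m1 H1]. exists (m1 ++ m2), m1, m2; auto.
Qed.

Lemma IP_len s w m : IP s w m -> length w <= length m.
Proof.
  revert m; induction w as [|y w IH]; intros m H; simpl in *. lia.
  destruct H as [a [b [-> [Ha Hb]]]]. rewrite length_app. apply words_ne in Ha. apply IH in Hb. lia.
Qed.

Lemma words_subst s t m : In m (words (subst s t)) <-> exists w, In w (words t) /\ IP s w m.
Proof.
  revert m; induction t; intros m; simpl.
  - split. intros H. exists [n]; split; auto. simpl. exists m, []. rewrite app_nil_r; auto.
    intros [w [[<-|[]] [a [b [-> [Ha ->]]]]]]. rewrite app_nil_r; auto.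
  - rewrite in_app_iff, IHt1, IHt2. split.
    intros [[w [H1 H2]]|[w [H1 H2]]]; exists w; rewrite in_app_iff; auto.
    intros [w [H1 H2]]. rewrite in_app_iff in H1. destruct H1; [left|right]; eauto.
  - change (In m (words (Mul (subst s t1) (subst s t2))) <-> exists w, In w (words (Mul t1 t2)) /\ IP s w m).
    rewrite in_words_mul. split.
    + intros [m1 [m2 [H1 [H2 ->]]]]. apply IHt1 in H1. apply IHt2 in H2.
      destruct H1 as [w1 [Hw1 P1]], H2 as [w2 [Hw2 P2]]. exists (w1 ++ w2). split.
      apply in_words_mul; eauto. apply IP_app; eauto.
    + intros [w [Hw P]]. apply in_words_mul in Hw. destruct Hw as [w1 [w2 [H1 [H2 ->]]]].
      apply IP_app in P. destruct P as [m1 [m2 [-> [P1 P2]]]].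
      exists m1, m2. split. apply IHt1; eauto. split; auto. apply IHt2; eauto.
Qed.

Lemma subst_comp s r t : subst r (subst s t) = subst (fun k => subst r (s k)) t.
Proof. induction t; simpl; congruence. Qed.
Lemma subst_id t : subst Var t = t.
Proof. induction t; simpl; congruence. Qed.


Definition adj n a b := a < n /\ b < n /\
  (b = S a \/ a = S b \/ (a = 0 /\ b = n - 1) \/ (b = 0 /\ a = n - 1)).
Definition edge n (m : list nat) := match m with [a; b] => adj n a b | _ => False end.
Definition Good n t := forall m, In m (words t) -> edge n m.
Definition Qrel n t1 t2 := forall a b,
  (forall m, In m (words t1) -> edge n (a ++ m ++ b)) ->
  forall m, In m (words t2) -> edge n (a ++ m ++ b).

Inductive ctx := Hole | CAL (c : ctx) (r : term) | CAR (l : term) (c : ctx)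
  | CML (c : ctx) (r : term) | CMR (l : term) (c : ctx).
Fixpoint plug (c : ctx) (t : term) : term :=
  match c with
  | Hole => t
  | CAL c r => plug c (Add t r)
  | CAR l c => plug c (Add l t)
  | CML c r => plug c (Mul t r)
  | CMR l c => plug c (Mul l t)
  end.

Lemma Qrel_plug n c : forall t1 t2, Qrel n t1 t2 -> Qrel n (plug c t1) (plug c t2).
Proof.
  induction c; intros t1 t2 HQ; simpl; auto; apply IHc; intros a b H m Hm.
  - simpl in Hm. apply in_app_or in Hm. destruct Hm as [Hm|Hm].
    + apply (HQ a b); auto. intros m' Hm'. apply H. simpl; apply in_or_app; auto.
    + apply H. simpl; apply in_or_app; auto.
  - simpl in Hm. apply in_app_or in Hm. destruct Hm as [Hm|Hm].
    + apply H. simpl; apply in_or_app; auto.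
    + apply (HQ a b); auto. intros m' Hm'. apply H. simpl; apply in_or_app; auto.
  - apply in_words_mul in Hm. destruct Hm as [m1 [m2 [H1 [H2 ->]]]].
    rewrite <- app_assoc. apply (HQ a (m2 ++ b)); auto.
    intros m' Hm'. replace (a ++ m' ++ m2 ++ b) with (a ++ (m' ++ m2) ++ b) by (repeat rewrite <- app_assoc; reflexivity).
    apply H. apply in_words_mul; eauto.
  - apply in_words_mul in Hm. destruct Hm as [m1 [m2 [H1 [H2 ->]]]].
    replace (a ++ (m1 ++ m2) ++ b) with ((a ++ m1) ++ m2 ++ b) by (repeat rewrite <- app_assoc; reflexivity).
    apply (HQ (a ++ m1) b); auto.
    intros m' Hm'. replace ((a ++ m1) ++ m' ++ b) with (a ++ (m1 ++ m') ++ b) by (repeat rewrite <- app_assoc; reflexivity).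
    apply H. apply in_words_mul; eauto.
Qed.

Definition Pinv n u v := forall s c, Good n (plug c (subst s u)) <-> Good n (plug c (subst s v)).

Lemma derives_inv n Sigma
  (Hax : forall u v, In (u, v) Sigma -> forall s, Qrel n (subst s u) (subst s v) /\ Qrel n (subst s v) (subst s u)) :
  forall u v, derives Sigma u v -> Pinv n u v.
Proof.
  intros u v D; induction D; intros r c.
  - destruct (Hax u v H r) as [H1 H2].
    split; intros G m Hm.
    + pose proof (Qrel_plug n c _ _ H1 [] []) as Q; simpl in Q.
      specialize (Q ltac:(intros m' Hm'; rewrite app_nil_r; auto) m Hm). rewrite app_nil_r in Q; exact Q.
    + pose proof (Qrel_plug n c _ _ H2 [] []) as Q; simpl in Q.
      specialize (Q ltac:(intros m' Hm'; rewrite app_nil_r; auto) m Hm). rewrite app_nil_r in Q; exact Q.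
  - tauto.
  - rewrite (IHD r c); tauto.
  - rewrite (IHD1 r c); apply IHD2.
  - rewrite !subst_comp. apply IHD.
  - simpl. change (Good n (plug (CAL c (subst r v)) (subst r u)) <-> Good n (plug (CAR (subst r u') c) (subst r v'))).
    rewrite (IHD1 r (CAL c (subst r v))). simpl. apply (IHD2 r (CAR (subst r u') c)).
  - simpl. change (Good n (plug (CML c (subst r v)) (subst r u)) <-> Good n (plug (CMR (subst r u') c) (subst r v'))).
    rewrite (IHD1 r (CML c (subst r v))). simpl. apply (IHD2 r (CMR (subst r u') c)).
Qed.


Lemma sumL_23 l : (forall x, In x l -> x = e2 \/ x = e3) -> sumL l = e2 \/ sumL l = e3.
Proof.
  induction l as [|x l IH]; simpl; intros H. auto.
  destruct (H x (or_introl eq_refl)) as [->| ->];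
  destruct IH as [->| ->]; auto; simpl; auto.
Qed.
Lemma sumL_3_in l : sumL l = e3 -> In e3 l.
Proof.
  induction l as [|x l IH]; simpl; intros H. discriminate.
  destruct x; auto; destruct (sumL l); simpl in H; try discriminate; auto.
Qed.
Lemma sumL_ne2 l x : In x l -> x <> e2 -> sumL l <> e2.
Proof.
  induction l as [|y l IH]; simpl; intros H Hx. destruct H.
  destruct H as [->|H].
  - destruct x, (sumL l); simpl; congruence.
  - intros E. apply (IH H Hx). destruct y, (sumL l); simpl in E; congruence.
Qed.
Lemma sumL_23_all l : sumL l = e2 \/ sumL l = e3 -> forall x, In x l -> x = e2 \/ x = e3.
Proof.
  induction l as [|y l IH]; simpl; intros H x Hx. destruct Hx.
  destruct Hx as [->|Hx].
  - destruct x, (sumL l); simpl in H; destruct H; try discriminate; auto.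
  - apply IH; auto. destruct y, (sumL l); simpl in H; destruct H; try discriminate; auto.
Qed.
Lemma sumL_3_all l : sumL l = e3 -> forall x, In x l -> x = e2 \/ x = e3.
Proof. intros H; apply sumL_23_all; auto. Qed.

Definition is3 (x : S4) := match x with e3 => true | _ => false end.
Fixpoint cnt (e : nat -> S4) (w : list nat) : nat :=
  match w with [] => 0 | y :: w' => (if is3 (e y) then 1 else 0) + cnt e w' end.

Lemma prod_cnt e w : (forall y, In y w -> e y = e3 \/ e y = e4) ->
  wv e w = match cnt e w with 0 => e4 | 1 => e3 | _ => e1 end.
Proof.
  unfold wv. induction w as [|y w IH]; simpl; intros H. reflexivity.
  rewrite IH by auto. destruct (H y (or_introl eq_refl)) as [-> | ->]; simpl.
  - destruct (cnt e w) as [|[|k]]; reflexivity.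
  - destruct (cnt e w) as [|[|k]]; reflexivity.
Qed.

Lemma cnt_all3 e w : (forall y, In y w -> e y = e3) -> cnt e w = length w.
Proof.
  induction w as [|y w IH]; simpl; intros H; auto.
  rewrite H by (left; auto). simpl. rewrite IH; auto.
Qed.

Lemma wv1 e y : wv e [y] = e y.
Proof. unfold wv; simpl. destruct (e y); reflexivity. Qed.
Lemma wv2 e y z : wv e [y; z] = S4mul (e y) (e z).
Proof. unfold wv; simpl. destruct (e y), (e z); reflexivity. Qed.

Lemma keyB p q s : (forall e, eval S4add S4mul e p = eval S4add S4mul e q) ->
  (forall m, In m (words (subst s p)) -> length m = 1) ->
  forall m, In m (words (subst s q)) -> In m (words (subst s p)).
Proof.
  intros Hs Hl m Hm. apply words_subst in Hm as [q0 [Hq0 Pq]].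
  assert (Shape : forall w, In w (words p) -> exists y, w = [y]).
  { intros w Hw. destruct (IP_ex s w) as [m0 P0].
    assert (Hm0 : In m0 (words (subst s p))) by (apply words_subst; eauto).
    apply Hl in Hm0. apply IP_len in P0. apply words_ne in Hw.
    destruct w as [|y [|z w]]; simpl in *; try lia. eauto. }
  set (e := fun y => if in_dec Nat.eq_dec y q0 then e3 else e2).
  assert (Hp : eval S4add S4mul e p = e2 \/ eval S4add S4mul e p = e3).
  { rewrite eval_words. apply sumL_23. intros x Hx. apply in_map_iff in Hx.
    destruct Hx as [w [<- Hw]]. destruct (Shape w Hw) as [y ->]. rewrite wv1.
    unfold e. destruct (in_dec Nat.eq_dec y q0); auto. }
  assert (Hall : forall y, In y q0 -> e y = e3).
  { intros y Hy. unfold e. destruct (in_dec Nat.eq_dec y q0); tauto. }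
  assert (Hc : cnt e q0 = length q0).
  { apply cnt_all3; auto. }
  assert (Hq0v := prod_cnt e q0 ltac:(intros y Hy; left; auto)).
  rewrite Hc in Hq0v. pose proof (words_ne _ _ Hq0) as Hlen.
  assert (Hin : In (wv e q0) (map (wv e) (words q))) by (apply in_map; auto).
  assert (Hq3 : eval S4add S4mul e q = e3).
  { rewrite <- Hs. destruct Hp as [Hp|Hp]; auto. exfalso.
    rewrite Hs, eval_words in Hp. revert Hp. apply (sumL_ne2 _ _ Hin).
    rewrite Hq0v. destruct (length q0) as [|[|k]]; discriminate. }
  assert (Hv := sumL_3_all _ ltac:(rewrite <- eval_words; exact Hq3) _ Hin).
  rewrite Hq0v in Hv.
  destruct q0 as [|y [|z w]]; simpl in Hlen, Hv; try lia; try (destruct Hv; discriminate).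
  clear Hv.
  assert (Hp3 : sumL (map (wv e) (words p)) = e3).
  { rewrite <- eval_words, Hs. exact Hq3. }
  apply sumL_3_in in Hp3. apply in_map_iff in Hp3. destruct Hp3 as [w [Hw Hwp]].
  destruct (Shape w Hwp) as [y' ->]. rewrite wv1 in Hw. unfold e in Hw.
  destruct (in_dec Nat.eq_dec y' [y]) as [[<-|[]]|]; try discriminate.
  apply words_subst. eauto.
Qed.


Definition ty (s : nat -> term) y := match words (s y) with m :: _ => Nat.eqb (length m) 2 | [] => false end.
Definition fv (s : nat -> term) y := match words (s y) with (a :: _) :: _ => a | _ => 0 end.
Definition gval n r a := if r <? a then a - r else a + n - r.
Definition col n r s y := Nat.even (gval n r (fv s y)).

Lemma edge_len n m : edge n m -> length m = 2.
Proof. destruct m as [|a [|b [|c m]]]; simpl; tauto. Qed.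

Lemma adj_sym n a b : adj n a b -> adj n b a.
Proof. unfold adj; lia. Qed.

Lemma gval_par n r a b : r < n -> adj n a b -> a <> r -> b <> r ->
  Nat.even (gval n r a) <> Nat.even (gval n r b).
Proof.
  intros Hr Hab Ha Hb.
  assert (gval n r a = S (gval n r b) \/ gval n r b = S (gval n r a)) as [E|E].
  { unfold gval, adj in *. destruct (Nat.ltb_spec r a), (Nat.ltb_spec r b); lia. }
  - rewrite E, Nat.even_succ, <- Nat.negb_even. destruct (Nat.even _); discriminate.
  - rewrite E, Nat.even_succ, <- Nat.negb_even. destruct (Nat.even _); discriminate.
Qed.

Lemma pigeon (f : nat -> nat) B n : B < n -> exists r, r < n /\ forall y, y < B -> f y <> r.
Proof.
  intros HB. destruct (classic (exists r, r < n /\ forall y, y < B -> f y <> r)) as [H|H]; auto.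
  exfalso.
  assert (Hinc : incl (seq 0 n) (map f (seq 0 B))).
  { intros r Hr. apply in_seq in Hr. destruct (classic (In r (map f (seq 0 B)))) as [Hi|Hi]; auto.
    exfalso. apply H. exists r. split. lia. intros y Hy E. apply Hi. rewrite <- E.
    apply in_map, in_seq. lia. }
  apply NoDup_incl_length in Hinc; [|apply seq_NoDup]. rewrite length_map, !length_seq in Hinc. lia.
Qed.

Lemma shapeA n p s : (forall m, In m (words (subst s p)) -> edge n m) ->
  forall w, In w (words p) ->
  (exists y, w = [y] /\ ty s y = true) \/
  (exists y z, w = [y; z] /\ ty s y = false /\ ty s z = false /\
     (forall m, In m (words (s y)) -> length m = 1) /\
     (forall m, In m (words (s z)) -> length m = 1) /\ adj n (fv s y) (fv s z)).
Proof.
  intros H w Hw.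
  assert (HI : forall m, IP s w m -> edge n m) by (intros m Hm; apply H, words_subst; eauto).
  destruct w as [|y [|z [|u w']]].
  - exfalso. exact (HI [] eq_refl).
  - left. exists y; split; auto. unfold ty.
    destruct (words (s y)) as [|m l] eqn:E.
    + destruct (words_ex (s y)) as [m0 Hm0]. rewrite E in Hm0. destruct Hm0.
    + assert (Hm : IP s [y] (m ++ [])) by (exists m, []; rewrite E; simpl; auto).
      apply HI, edge_len in Hm. rewrite app_nil_r in Hm. rewrite Hm. reflexivity.
  - right. exists y, z.
    assert (L : forall m1 m2, In m1 (words (s y)) -> In m2 (words (s z)) ->
               length m1 = 1 /\ length m2 = 1 /\ edge n (m1 ++ m2)).
    { intros m1 m2 H1 H2.
      assert (Hm : IP s [y; z] (m1 ++ m2 ++ [])) by (exists m1, (m2 ++ []); split; auto; split; auto; exists m2, []; repeat split; auto).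
      apply HI in Hm. rewrite app_nil_r in Hm. pose proof (edge_len _ _ Hm) as E.
      rewrite length_app in E. apply words_ne in H1. apply words_ne in H2. repeat split; auto; lia. }
    destruct (words_ex (s y)) as [a0 Ha0], (words_ex (s z)) as [b0 Hb0].
    unfold ty, fv.
    destruct (words (s y)) as [|m1 l1] eqn:E1; [destruct Ha0|].
    destruct (words (s z)) as [|m2 l2] eqn:E2; [destruct Hb0|].
    destruct (L m1 m2 (or_introl eq_refl) (or_introl eq_refl)) as [L1 [L2 L3]].
    destruct m1 as [|a [|]]; simpl in L1; try discriminate.
    destruct m2 as [|b [|]]; simpl in L2; try discriminate.
    split; [reflexivity|]. split; [reflexivity|]. split; [reflexivity|]. split; [|split].
    + intros m Hm. destruct (L m b0 Hm Hb0); tauto.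
    + intros m Hm. destruct (L a0 m Ha0 Hm); tauto.
    + exact L3.
  - exfalso.
    destruct (words_ex (s y)) as [m1 H1], (words_ex (s z)) as [m2 H2], (words_ex (s u)) as [m3 H3].
    destruct (IP_ex s w') as [m4 H4].
    assert (Hm : IP s (y :: z :: u :: w') (m1 ++ m2 ++ m3 ++ m4)).
    { exists m1, (m2 ++ m3 ++ m4). repeat split; auto. exists m2, (m3 ++ m4). repeat split; auto.
      exists m3, m4; auto. }
    apply HI, edge_len in Hm. rewrite !length_app in Hm.
    apply words_ne in H1. apply words_ne in H2. apply words_ne in H3. lia.
Qed.


Lemma keyA n B p q s : 3 <= n -> B < n ->
  (forall w, In w (words p) -> forall y, In y w -> y < B) ->
  (forall e, eval S4add S4mul e p = eval S4add S4mul e q) ->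
  (forall m, In m (words (subst s p)) -> edge n m) ->
  forall m, In m (words (subst s q)) -> edge n m.
Proof.
  intros Hn HB Hbnd Hs Hp m Hm. apply words_subst in Hm as [q0 [Hq0 Pq]].
  pose proof (shapeA n p s Hp) as Shape.
  destruct (pigeon (fv s) B n HB) as [r [Hr Hfr]].
  assert (Hcol : forall y z, In [y; z] (words p) -> ty s y = false -> ty s z = false ->
                 adj n (fv s y) (fv s z) -> col n r s y <> col n r s z).
  { intros y z Hyz _ _ A. unfold col. apply gval_par; auto; apply Hfr; apply (Hbnd _ Hyz); simpl; auto. }
  set (E := fun (b : bool) y => if in_dec Nat.eq_dec y q0 then
              (if ty s y then e3 else if Bool.eqb (col n r s y) b then e3 else e4) else e2).
  assert (F1 : forall b w, In w (words p) -> wv (E b) w = e2 \/ wv (E b) w = e3).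
  { intros b w Hw. destruct (Shape w Hw) as [[y [-> Ty]]|[y [z [-> [Ty [Tz [_ [_ A]]]]]]]].
    - rewrite wv1. unfold E. rewrite Ty. destruct (in_dec Nat.eq_dec y q0); auto.
    - rewrite wv2. pose proof (Hcol y z Hw Ty Tz A) as C. unfold E. rewrite Ty, Tz.
      destruct (in_dec Nat.eq_dec y q0), (in_dec Nat.eq_dec z q0); simpl; auto;
      destruct (col n r s y), (col n r s z), b; simpl; auto; congruence. }
  assert (F2 : forall b y, In y q0 -> E b y = e3 \/ E b y = e4).
  { intros b y Hy. unfold E. destruct (in_dec Nat.eq_dec y q0); [|tauto].
    destruct (ty s y); auto. destruct (Bool.eqb _ _); auto. }
  assert (Hin : forall b, In (wv (E b) q0) (map (wv (E b)) (words q))) by (intros; apply in_map; auto).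
  assert (F3 : forall b, eval S4add S4mul (E b) q = e3 /\ cnt (E b) q0 = 1).
  { intros b.
    assert (Hpv : eval S4add S4mul (E b) p = e2 \/ eval S4add S4mul (E b) p = e3).
    { rewrite eval_words. apply sumL_23. intros x Hx. apply in_map_iff in Hx.
      destruct Hx as [w [<- Hw]]. apply F1; auto. }
    assert (Hv := prod_cnt (E b) q0 (F2 b)).
    assert (Hq3 : eval S4add S4mul (E b) q = e3).
    { rewrite <- Hs. destruct Hpv as [Hpv|Hpv]; auto. exfalso.
      rewrite Hs, eval_words in Hpv. revert Hpv. apply (sumL_ne2 _ _ (Hin b)).
      rewrite Hv. destruct (cnt (E b) q0) as [|[|k]]; discriminate. }
    split; auto.
    assert (Hw := sumL_3_all _ ltac:(rewrite <- eval_words; exact Hq3) _ (Hin b)).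
    rewrite Hv in Hw. destruct (cnt (E b) q0) as [|[|k]]; auto; destruct Hw; discriminate. }
  assert (Ein : forall b y, In y q0 -> is3 (E b y) = (ty s y || Bool.eqb (col n r s y) b)).
  { intros b y Hy. unfold E. destruct (in_dec Nat.eq_dec y q0); [|tauto].
    destruct (ty s y); auto. destruct (Bool.eqb _ _); auto. }
  assert (Cge : forall w, (forall y, In y w -> In y q0) -> length w <= cnt (E true) w + cnt (E false) w).
  { induction w as [|y w IH]; simpl; intros Hsub. lia.
    rewrite !Ein by auto. specialize (IH ltac:(intros; apply Hsub; auto)).
    destruct (ty s y), (col n r s y); simpl; lia. }
  pose proof (Cge q0 (fun y H => H)) as Cq. rewrite (proj2 (F3 true)), (proj2 (F3 false)) in Cq.
  pose proof (proj2 (F3 true)) as Ct. pose proof (proj2 (F3 false)) as Cf.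
  pose proof (words_ne _ _ Hq0) as Hlen.
  assert (Hp3 : In e3 (map (wv (E true)) (words p))).
  { apply sumL_3_in. rewrite <- eval_words, Hs. apply (proj1 (F3 true)). }
  apply in_map_iff in Hp3. destruct Hp3 as [w [Hw3 Hwp]].
  destruct q0 as [|y [|z [|u q1]]]; simpl in Hlen, Cq; try lia.
  -
    simpl in Ct, Cf. rewrite Ein in Ct, Cf by (left; auto).
    assert (Ty : ty s y = true) by (destruct (ty s y), (col n r s y); simpl in *; auto; lia).
    destruct (Shape w Hwp) as [[y' [-> Ty']]|[y1 [z1 [-> [Ty1 [Tz1 _]]]]]].
    + rewrite wv1 in Hw3. unfold E in Hw3.
      destruct (in_dec Nat.eq_dec y' [y]) as [[<-|[]]|]; [|discriminate].
      apply Hp, words_subst. eauto.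
    + rewrite wv2 in Hw3. unfold E in Hw3.
      destruct (in_dec Nat.eq_dec y1 [y]) as [[<-|[]]|]; [congruence|].
      destruct (E true z1); discriminate.
  -
    simpl in Ct, Cf. rewrite !Ein in Ct, Cf by (simpl; auto).
    assert (Ty : ty s y = false /\ ty s z = false /\ col n r s y <> col n r s z).
    { destruct (ty s y), (ty s z), (col n r s y), (col n r s z); simpl in *; repeat split; try lia; congruence. }
    destruct Ty as [Ty [Tz Cyz]].
    destruct (Shape w Hwp) as [[y' [-> Ty']]|[y1 [z1 [-> [Ty1 [Tz1 [L1 [L2 A]]]]]]]].
    + rewrite wv1 in Hw3. unfold E in Hw3.
      destruct (in_dec Nat.eq_dec y' [y; z]) as [[<-|[<-|[]]]|]; try congruence.
    + pose proof (Hcol y1 z1 Hwp Ty1 Tz1 A) as C1.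
      rewrite wv2 in Hw3. unfold E in Hw3.
      destruct (in_dec Nat.eq_dec y1 [y; z]) as [Hy1|]; [|discriminate].
      destruct (in_dec Nat.eq_dec z1 [y; z]) as [Hz1|]; [|exfalso; revert Hw3; destruct (ty s y1); [|destruct (Bool.eqb (col n r s y1) true)]; simpl; discriminate].
      destruct Pq as [m1 [m' [-> [Hm1 [m2 [m3 [-> [Hm2 ->]]]]]]]].
      destruct Hy1 as [<-|[<-|[]]]; destruct Hz1 as [<-|[<-|[]]]; try congruence.
      * apply Hp, words_subst. eexists. split; [exact Hwp|].
        exists m1, (m2 ++ []). repeat split; auto. exists m2, []; repeat split; auto.
      * assert (Hm : In (m2 ++ m1 ++ []) (words (subst s p))).
        { apply words_subst. eexists. split; [exact Hwp|].
          exists m2, (m1 ++ []). repeat split; auto. exists m1, []; repeat split; auto. }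
        apply Hp in Hm. rewrite app_nil_r in *.
        pose proof (L1 _ Hm2) as La. pose proof (L2 _ Hm1) as Lb.
        destruct m1 as [|a [|]]; simpl in Lb; try discriminate.
        destruct m2 as [|c [|]]; simpl in La; try discriminate.
        simpl in *. apply adj_sym; auto.
Qed.


Definition succn n i := if Nat.eqb (S i) n then 0 else S i.
Definition edgeT n i := Mul (Var i) (Var (succn n i)).
Fixpoint cyc n k := match k with 0 => edgeT n 0 | S k' => Add (edgeT n (S k')) (cyc n k') end.
Fixpoint lin k := match k with 0 => Var 0 | S k' => Mul (lin k') (Var (S k')) end.

Lemma words_lin k : words (lin k) = [seq 0 (S k)].
Proof.
  induction k; simpl; auto. rewrite IHk. simpl. f_equal.
  change (1 :: seq 2 k) with (seq 1 (S k)). rewrite seq_S. reflexivity.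
Qed.

Lemma words_cyc n k m : In m (words (cyc n k)) -> exists i, i <= k /\ m = [i; succn n i].
Proof.
  induction k; simpl; intros H.
  - destruct H as [<-|[]]. exists 0; auto.
  - destruct H as [<-|H]. exists (S k); auto.
    destruct (IHk H) as [i [Hi ->]]. exists i; split; auto.
Qed.

Lemma Good_cyc n : 3 <= n -> Good n (cyc n (n - 1)).
Proof.
  intros Hn m Hm. destruct (words_cyc _ _ _ Hm) as [i [Hi ->]]. simpl. unfold adj, succn.
  destruct (Nat.eqb_spec (S i) n); lia.
Qed.


Lemma ev_lin2 (e : nat -> S4) k : (exists i, i <= k /\ e i = e2) -> eval S4add S4mul e (lin k) = e2.
Proof.
  induction k; simpl; intros [i [Hi Hei]].
  - replace i with 0 in * by lia. auto.
  - destruct (Nat.eq_dec i (S k)) as [->|].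
    + rewrite Hei. destruct (eval S4add S4mul e (lin k)); reflexivity.
    + rewrite IHk by (exists i; split; auto; lia). reflexivity.
Qed.

Lemma ev_lin4 (e : nat -> S4) k : (forall i, i <= k -> e i = e4) -> eval S4add S4mul e (lin k) = e4.
Proof.
  induction k; simpl; intros H. apply H; auto.
  rewrite IHk, H by auto. reflexivity.
Qed.

Lemma ev_cyc1 (e : nat -> S4) n k i : i <= k -> eval S4add S4mul e (edgeT n i) = e1 -> eval S4add S4mul e (cyc n k) = e1.
Proof.
  induction k; simpl; intros Hi H.
  - replace i with 0 in * by lia. exact H.
  - destruct (Nat.eq_dec i (S k)) as [->|].
    + simpl in H. rewrite H. reflexivity.
    + rewrite (IHk ltac:(lia) H). generalize (S4mul (e (S k)) (e (succn n (S k)))); intros x; destruct x; reflexivity.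
Qed.

Lemma ev_cyc_eq (e : nat -> S4) n k : (forall i, i <= k -> eval S4add S4mul e (edgeT n i) <> e2) -> eval S4add S4mul e (cyc n k) <> e1 ->
  forall i, i <= k -> eval S4add S4mul e (edgeT n i) = eval S4add S4mul e (cyc n k).
Proof.
  induction k; simpl; intros H2 H1 i Hi.
  - replace i with 0 by lia. reflexivity.
  - change (eval S4add S4mul e (edgeT n (S k))) with (S4mul (e (S k)) (e (succn n (S k)))) in *.
    set (a := S4mul (e (S k)) (e (succn n (S k)))) in *.
    assert (Ha : a <> e2) by (apply (H2 (S k)); auto).
    assert (Hb1 : eval S4add S4mul e (cyc n k) <> e1) by (intros E; rewrite E in H1; destruct a; simpl in H1; auto).
    assert (IH := IHk ltac:(intros; apply H2; lia) Hb1).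
    assert (Hb2 : eval S4add S4mul e (cyc n k) <> e2) by (rewrite <- (IH 0) by lia; apply H2; lia).
    destruct (Nat.eq_dec i (S k)) as [->|].
    + change (a = S4add a (eval S4add S4mul e (cyc n k))). clearbody a. destruct a, (eval S4add S4mul e (cyc n k)); simpl in *; congruence.
    + change (eval S4add S4mul e (edgeT n i) = S4add a (eval S4add S4mul e (cyc n k))). rewrite (IH i) by lia. clearbody a. destruct a, (eval S4add S4mul e (cyc n k)); simpl in *; congruence.
Qed.

Definition flip (x : S4) := match x with e3 => e4 | e4 => e3 | y => y end.

Lemma sat_cyc (e : nat -> S4) m : let n := 2 * m + 3 in
  eval S4add S4mul e (cyc n (n - 1)) = S4add (eval S4add S4mul e (cyc n (n - 1))) (eval S4add S4mul e (lin (n - 1))).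
Proof.
  intros n. set (k := n - 1).
  assert (Hsk : forall i, i <= k -> succn n i <= k).
  { intros i Hi. unfold succn, k, n in *. destruct (Nat.eqb_spec (S i) (2 * m + 3)); lia. }
  destruct (classic (exists i, i <= k /\ e i = e2)) as [H2|H2].
  { rewrite (ev_lin2 e) by auto. destruct (eval S4add S4mul e _); reflexivity. }
  assert (N2 : forall i, i <= k -> e i <> e2) by (intros i Hi E; apply H2; eauto).
  destruct (classic (exists i, i <= k /\ e i = e1)) as [[i [Hi H1]]|H1].
  { rewrite (ev_cyc1 e n k i) by (auto; simpl; rewrite H1; specialize (N2 _ (Hsk i Hi));
      destruct (e (succn n i)); simpl; congruence). reflexivity. }
  assert (N34 : forall i, i <= k -> e i = e3 \/ e i = e4).
  { intros i Hi. specialize (N2 i Hi). destruct (e i) eqn:E; auto; exfalso; [apply H1; exists i; auto | congruence]. }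
  assert (E2 : forall i, i <= k -> eval S4add S4mul e (edgeT n i) <> e2).
  { intros i Hi. simpl. destruct (N34 i Hi) as [-> | ->], (N34 _ (Hsk i Hi)) as [-> | ->]; discriminate. }
  destruct (classic (eval S4add S4mul e (cyc n k) = e1)) as [C1|C1].
  { rewrite C1; reflexivity. }
  pose proof (ev_cyc_eq e n k E2 C1) as Eq.
  destruct (eval S4add S4mul e (cyc n k)) eqn:V.
  - congruence.
  - exfalso. apply (E2 0); [lia|]. rewrite Eq; auto; lia.
  - exfalso.
    assert (Alt : forall i, i <= k -> e i = if Nat.even i then e 0 else flip (e 0)).
    { induction i; intros Hi. reflexivity.
      rewrite Nat.even_succ, <- Nat.negb_even.
      assert (E := Eq i ltac:(lia)). simpl in E.
      unfold succn in E. destruct (Nat.eqb_spec (S i) n); [unfold k in Hi; lia|].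
      pose proof (N34 i ltac:(lia)) as Ni. pose proof (N34 (S i) Hi) as Nsi.
      assert (Hf : e (S i) = flip (e i)) by (destruct Ni as [R|R]; rewrite R in *; destruct Nsi as [R'|R']; rewrite R' in *; simpl in *; congruence).
      rewrite Hf, (IHi ltac:(lia)). destruct (N34 0 ltac:(lia)) as [R|R]; rewrite R; destruct (Nat.even i); reflexivity. }
    assert (Ev : Nat.even k = true) by (apply Nat.even_spec; exists (m + 1); unfold k, n; lia).
    assert (E := Eq k ltac:(lia)). simpl in E. unfold succn in E.
    destruct (Nat.eqb_spec (S k) n); [|unfold k, n in *; lia].
    rewrite (Alt k) in E by lia. rewrite Ev in E.
    destruct (N34 0 ltac:(lia)) as [R|R]; rewrite R in E; discriminate.
  - assert (A4 : forall i, i <= k -> e i = e4).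
    { intros i Hi. assert (E := Eq i Hi). simpl in E.
      destruct (N34 i Hi) as [R|R]; auto. rewrite R in E.
      destruct (N34 _ (Hsk i Hi)) as [R'|R']; rewrite R' in E; discriminate. }
    rewrite (ev_lin4 e) by auto. reflexivity.
Qed.


Fixpoint maxv (t : term) : nat :=
  match t with Var k => S k | Add a b => Nat.max (maxv a) (maxv b) | Mul a b => Nat.max (maxv a) (maxv b) end.

Lemma maxv_ok t w y : In w (words t) -> In y w -> y < maxv t.
Proof.
  revert w; induction t; intros w Hw Hy; simpl in *.
  - destruct Hw as [<-|[]]. destruct Hy as [<-|[]]. lia.
  - apply in_app_or in Hw. destruct Hw as [Hw|Hw]; [specialize (IHt1 _ Hw Hy)|specialize (IHt2 _ Hw Hy)]; lia.
  - apply (in_words_mul t1 t2) in Hw. destruct Hw as [m1 [m2 [H1 [H2 ->]]]].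
    apply in_app_or in Hy. destruct Hy as [Hy|Hy]; [specialize (IHt1 _ H1 Hy)|specialize (IHt2 _ H2 Hy)]; lia.
Qed.

Lemma bound_ex (Sigma : list identity) : exists B, forall u v, In (u, v) Sigma -> maxv u <= B /\ maxv v <= B.
Proof.
  induction Sigma as [|[u v] S IH]. exists 0; intros u v [].
  destruct IH as [B HB]. exists (Nat.max B (Nat.max (maxv u) (maxv v))).
  intros u' v' [E|H]. injection E as -> ->. lia. destruct (HB _ _ H); lia.
Qed.

Lemma Qkey n B u v s : 3 <= n -> B < n -> maxv u <= B ->
  (forall e, eval S4add S4mul e u = eval S4add S4mul e v) -> Qrel n (subst s u) (subst s v).
Proof.
  intros Hn HB Hu Hs a b H m' Hm'.
  destruct (words_ex (subst s u)) as [m0 H0].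
  pose proof (edge_len _ _ (H m0 H0)) as L0. rewrite !length_app in L0. pose proof (words_ne _ _ H0).
  destruct a as [|x a]; [destruct b as [|x b]|].
  - simpl. rewrite app_nil_r.
    apply (keyA n B u v s Hn HB); auto.
    + intros w Hw y Hy. pose proof (maxv_ok _ _ _ Hw Hy). lia.
    + intros m Hm. specialize (H m Hm). simpl in H. rewrite app_nil_r in H. exact H.
  - apply H. apply (keyB u v s); auto.
    intros m Hm. pose proof (edge_len _ _ (H m Hm)) as L. rewrite !length_app in L. simpl in *.
    pose proof (words_ne _ _ Hm). lia.
  - apply H. apply (keyB u v s); auto.
    intros m Hm. pose proof (edge_len _ _ (H m Hm)) as L. rewrite !length_app in L. simpl in *.
    pose proof (words_ne _ _ Hm). lia.
Qed.

Theorem proposition2p1 : ~ finitely_based S4add S4mul.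
Proof.
  intros [Sigma [Hsnd Hcmp]].
  destruct (bound_ex Sigma) as [B HB].
  set (n := 2 * B + 3).
  assert (Hax : forall u v, In (u, v) Sigma -> forall s,
            Qrel n (subst s u) (subst s v) /\ Qrel n (subst s v) (subst s u)).
  { intros u v Huv s. destruct (HB _ _ Huv) as [Bu Bv]. pose proof (Hsnd _ Huv) as Sat.
    unfold satisfies in Sat; simpl in Sat.
    split; apply (Qkey n B); unfold n; try lia; auto. }
  set (C := cyc n (n - 1)). set (L := lin (n - 1)).
  assert (D : derives Sigma C (Add C L)).
  { apply Hcmp. intros e. simpl. apply (sat_cyc e B). }
  pose proof (derives_inv n Sigma Hax _ _ D Var Hole) as P. simpl in P.
  rewrite !subst_id in P.
  assert (G : Good n (Add C L)) by (apply P, Good_cyc; unfold n; lia).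
  assert (Hin : In (seq 0 n) (words (Add C L))).
  { simpl. apply in_or_app. right. unfold L. rewrite words_lin.
    replace (S (n - 1)) with n by (unfold n; lia). left; auto. }
  apply G, edge_len in Hin. rewrite length_seq in Hin. unfold n in Hin. lia.
Qed.
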